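(* Define integers $M(k;r)$ for $k,r\geq 1$ by $M(k;1)=k$, $M(1;r)=1$, $M(2;r)=r+1$, and for $k\geq 3$, $r\geq 2$, $$M(k;r)=M(k-1;r)+\Delta^{M(k-1;r)}(k-1;r)+M(k;r-1)-1.$$ Then this recursion is well defined (in particular $M(k-1;r)\ge AW(k-1;r)$ whenever $\Delta^{M(k-1;r)}(k-1;r)$ is used), and $AW(k;r)\le M(k;r)$ for all $k,r\geq 1$.
   Context: A sequence of positive integers $w_1<w_2<\dots<w_n$ is an ascending wave if $w_{i+1}-w_i \geq w_i-w_{i-1}$ for $2\le i\le n-1$. For positive integers $k,r$, $AW(k;r)$ denotes the least positive integer $N$ such that every $r$-coloring of $\{1,\dots,N\}$ contains a $k$-term monochromatic ascending wave. For $k\ge 2$ and $M\ge AW(k;r)$: let $\Psi^M(k;r)$ be the set of all $r$-colorings of $\{1,\dots,M\}$; for $\psi\in\Psi^M(k;r)$ let $\chi_k(\psi)$ be the set of monochromatic $k$-term ascending waves under $\psi$; for $w=(w_1,\dots,w_k)\in\chi_k(\psi)$ let $d_{k-1}(w)=w_k-w_{k-1}$; let $\delta_k(\psi)=\min\{d_{k-1}(w): w\in\chi_k(\psi)\}$; and let $\Delta^M(k;r)=\max\{\delta_k(\psi):\psi\in\Psi^M(k;r)\}$. *)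

(* Defs.v *)
From mathcomp Require Import all_boot.
Set Implicit Arguments. Unset Strict Implicit. Unset Printing Implicit Defensive.

Definition ascending_wave (s : seq nat) : bool :=
  all (fun x => 0 < x) s && sorted ltn s &&
  all (fun i => nth 0 s i.+1 - nth 0 s i <= nth 0 s i.+2 - nth 0 s i.+1)
      (iota 0 (size s - 2)).

(* An r-coloring of {1,...,N} is c : {ffun 'I_N -> 'I_r}; the integer x
   (1 <= x <= N) gets colour c (x-1). *)
Definition wave_vals N k (t : k.-tuple 'I_N) : seq nat := map (fun i : 'I_N => (i : nat).+1) t.

Definition is_mono_wave N r k (c : {ffun 'I_N -> 'I_r}) (t : k.-tuple 'I_N) : bool :=
  ascending_wave (wave_vals t) && constant (map c t).

Definition aw_prop (k r N : nat) : bool :=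
  [forall c : {ffun 'I_N -> 'I_r}, [exists t : k.-tuple 'I_N, is_mono_wave c t]].

Definition AW_spec (k r n : nat) : Prop :=
  [/\ 0 < n, aw_prop k r n & forall m, 0 < m -> aw_prop k r m -> n <= m].

Definition dlast N k (t : k.-tuple 'I_N) : nat :=
  nth 0 (wave_vals t) k.-1 - nth 0 (wave_vals t) k.-2.

(* delta_k(psi): minimum of d_{k-1} over monochromatic k-term waves.  Every
   such value is < N, so N is a neutral element whenever chi_k(psi) is
   nonempty (which is guaranteed when N >= AW(k;r)). *)
Definition delta N r k (c : {ffun 'I_N -> 'I_r}) : nat :=
  \big[minn/N]_(t : k.-tuple 'I_N | is_mono_wave c t) dlast t.

Definition Delta (k r N : nat) : nat :=
  \max_(c : {ffun 'I_N -> 'I_r}) @delta N r k c.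

(* The recursion M(k;r); values at k = 0 or r = 0 are irrelevant (set to 0). *)
Fixpoint M (k r : nat) {struct k} : nat :=
  match k with
  | 0 => 0
  | 1 => 1
  | 2 => r.+1
  | (k'.+1) as k0 =>
      let fix Mk (r : nat) : nat :=
        match r with
        | 0 => 0
        | 1 => k0
        | r'.+1 => M k' r + Delta k' r (M k' r) + Mk r' - 1
        end in Mk r
  end.

(* Main.v *)
Require Import Defs.
From mathcomp Require Import all_boot zify.

Lemma waveP s : ascending_wave s <->
  [/\ forall i, i < size s -> 0 < nth 0 s i,
      forall i, i.+1 < size s -> nth 0 s i < nth 0 s i.+1 &
      forall i, i.+2 < size s -> nth 0 s i.+1 - nth 0 s i <= nth 0 s i.+2 - nth 0 s i.+1].
Proof.
rewrite /ascending_wave; split.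
- case/andP=> /andP[/(all_nthP 0) H1 /(sortedP 0) H2] /allP H3; split => //.
  move=> i Hi; apply: (H3 i); rewrite mem_iota; lia.
- case=> H1 H2 H3; apply/andP; split; first (apply/andP; split).
  + by apply/(all_nthP 0).
  + by apply/(sortedP 0).
  + apply/allP => i; rewrite mem_iota => Hi; apply: H3; lia.
Qed.

Lemma wave_shift a s : ascending_wave s -> ascending_wave (map (addn a) s).
Proof.
move/waveP=> [H1 H2 H3]; apply/waveP; rewrite size_map; split.
- move=> i Hi; rewrite (nth_map 0) //; have := H1 i Hi; lia.
- move=> i Hi; rewrite !(nth_map 0) //; try lia; have := H2 i Hi; lia.
- move=> i Hi; rewrite !(nth_map 0) //; try lia; have := H3 i Hi; lia.
Qed.

Lemma wave_rcons s x : ascending_wave s -> 0 < size s ->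
  nth 0 s (size s).-1 < x ->
  nth 0 s (size s).-1 - nth 0 s (size s).-2 <= x - nth 0 s (size s).-1 ->
  ascending_wave (rcons s x).
Proof.
move/waveP=> [H1 H2 H3] Hs Hx Hg; apply/waveP; rewrite size_rcons; split.
- move=> i Hi; rewrite nth_rcons; case: (ltnP i (size s)) => Hl; first exact: H1.
  have -> : i == size s by apply/eqP; lia. lia.
- move=> i Hi; rewrite !nth_rcons; case: (ltnP i.+1 (size s)) => Hl.
  + have -> : i < size s by lia. exact: H2.
  + have -> : i < size s by lia. have -> : i.+1 == size s by apply/eqP; lia.
    have -> : i = (size s).-1 by lia. exact Hx.
- move=> i Hi; rewrite !nth_rcons.
  have E1 : i < size s by lia. have E2 : i.+1 < size s by lia. rewrite E1 E2.
  case: (ltnP i.+2 (size s)) => Hl; first exact: H3.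
  have -> : i.+2 == size s by apply/eqP; lia.
  have -> : i.+1 = (size s).-1 by lia. have -> : i = (size s).-2 by lia. exact Hg.
Qed.
Lemma M_rec k r : M k.+3 r.+2 = M k.+2 r.+2 + Delta k.+2 r.+2 (M k.+2 r.+2) + M k.+3 r.+1 - 1.
Proof. Opaque Delta. reflexivity. Qed.
Transparent Delta.
Lemma M_1 k : M k.+1 1 = k.+1.
Proof. by case: k => [|[|k]]. Qed.

Lemma M_2 r : M 2 r = r.+1. Proof. by []. Qed.

Lemma constant_eq (T : eqType) (s : seq T) x : (forall y, y \in s -> y = x) -> constant s.
Proof.
case: s => [//|a s] H /=; apply/allP => y Hy /=.
apply/eqP; rewrite /= (H y); last by rewrite inE Hy orbT.
by rewrite (H a) // mem_head.
Qed.
Lemma constant_mem (T : eqType) (s : seq T) x y : constant s -> x \in s -> y \in s -> x = y.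
Proof.
case: s => [//|a s] /= /allP H.
rewrite !inE => /orP[/eqP E1|/H /eqP E1] /orP[/eqP E2|/H /eqP E2]; by rewrite E1 E2.
Qed.

Lemma vals_le m k (t : k.-tuple 'I_m) i : nth 0 (wave_vals t) i <= m.
Proof.
case: (ltnP i (size (wave_vals t))) => H; last by rewrite nth_default.
have /mapP [x _ ->] := mem_nth 0 H. exact: ltn_ord.
Qed.

Lemma size_vals m k (t : k.-tuple 'I_m) : size (wave_vals t) = k.
Proof. by rewrite /wave_vals size_map size_tuple. Qed.

Lemma base_r1 k : aw_prop k.+1 1 k.+1.
Proof.
apply/forallP => c; apply/existsP; exists (ord_tuple k.+1); apply/andP; split.
- have -> : wave_vals (ord_tuple k.+1) = iota 1 k.+1.
    have -> : iota 1 k.+1 = map (addn 1) (iota 0 k.+1) by rewrite -iotaDl.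
    rewrite /wave_vals val_ord_tuple -val_enum_ord -map_comp.
    by apply: eq_map.
  apply/waveP; rewrite size_iota; split.
  + by move=> i Hi; rewrite nth_iota.
  + by move=> i Hi; rewrite !nth_iota //; lia.
  + by move=> i Hi; rewrite !nth_iota //; lia.
- apply: (@constant_eq _ _ ord0) => y _; exact: ord1.
Qed.

Lemma base_k1 r : aw_prop 1 r.+1 1.
Proof. apply/forallP => c; apply/existsP; exists [tuple ord0]; by []. Qed.

Lemma step k r m D M' : 0 < D ->
 (forall c : {ffun 'I_m -> 'I_r.+2}, exists t : k.+1.-tuple 'I_m, is_mono_wave c t && (dlast t <= D)) ->
 aw_prop k.+2 r.+1 M' -> aw_prop k.+2 r.+2 (m + D + M' - 1).
Proof.
move=> HD Hm HM; apply/forallP => c.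
move: HM; case: (posnP M') => [M0 HM|MP HM].
  rewrite M0 in HM.
  have := forallP HM [ffun i : 'I_0 => (ord0 : 'I_r.+1)].
  by case/existsP => t _; case: (tnth t ord0).
set N := m + D + M' - 1.
have hmN : m <= N by rewrite /N; lia.
pose c1 : {ffun 'I_m -> 'I_r.+2} := [ffun i : 'I_m => c (widen_ord hmN i)].
have [t /andP[/andP[Hw Hc] Hd]] := Hm c1.
pose j := c1 (tnth t ord0).
have shiftP : forall y : 'I_M', m + D - 1 + y < N.
  by move=> y; have := ltn_ord y; rewrite /N; lia.
pose sh (y : 'I_M') : 'I_N := Ordinal (shiftP y).
have Hv := @vals_le _ _ t.
have Hs := @size_vals _ _ t.
case: (boolP [exists y, c (sh y) == j]).
- case/existsP => y /eqP Hy.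
  have Hsz : size (rcons (map (widen_ord hmN) t) (sh y)) == k.+2.
    by rewrite size_rcons size_map size_tuple.
  apply/existsP; exists (Tuple Hsz); rewrite /is_mono_wave; apply/andP; split.
  + have -> : wave_vals (Tuple Hsz) = rcons (wave_vals t) (m + D + y).
      rewrite /wave_vals /= map_rcons -map_comp; congr rcons.
      rewrite /sh /=; lia.
    apply: wave_rcons => //; rewrite Hs //=.
    * have := Hv k; lia.
    * move: Hd; rewrite /dlast /=; have := Hv k; lia.
  + apply: (@constant_eq _ _ j) => z; rewrite /= map_rcons mem_rcons inE.
    case/orP => [/eqP -> //|/mapP [i /mapP [i' Hi' ->] ->]].
    have E : c (widen_ord hmN i') = c1 i' by rewrite ffunE.
    rewrite E; apply: (@constant_mem _ _ _ _ Hc); apply/map_f => //; exact: mem_tnth.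
- rewrite negb_exists => /forallP Hno.
  pose sq (a : 'I_r.+2) : 'I_r.+1 := inord (if (a : nat) < j then (a : nat) else (a : nat).-1).
  have sq_inj : forall a b, a != j -> b != j -> sq a = sq b -> a = b.
    move=> a b Ha Hb /(congr1 (@nat_of_ord _)); rewrite /sq !inordK.
    * move=> E; apply: val_inj => /=; move: Ha Hb => /eqP Ha /eqP Hb.
      have Ha' : (a : nat) <> j by move=> H; apply: Ha; exact: val_inj.
      have Hb' : (b : nat) <> j by move=> H; apply: Hb; exact: val_inj.
      move: E; case: ifP; case: ifP; lia.
    * have := ltn_ord b; have := ltn_ord j; case: ifP; lia.
    * have := ltn_ord a; have := ltn_ord j; case: ifP; lia.
  pose c2 : {ffun 'I_M' -> 'I_r.+1} := [ffun y : 'I_M' => sq (c (sh y))].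
  have /existsP [t2 /andP[Hw2 Hc2]] := forallP HM c2.
  apply/existsP; exists (map_tuple sh t2); apply/andP; split.
  + have -> : wave_vals (map_tuple sh t2) = map (addn (m + D - 1)) (wave_vals t2).
      rewrite /wave_vals /= -!map_comp; apply: eq_map => y /=; lia.
    exact: wave_shift.
  + apply: (@constant_eq _ _ (c (sh (tnth t2 ord0)))) => z; rewrite /= -map_comp.
    case/mapP => y Hy ->; apply: sq_inj; rewrite ?Hno //.
    have E : forall w, sq (c (sh w)) = c2 w by move=> w; rewrite ffunE.
    rewrite !E; apply: (@constant_mem _ _ _ _ Hc2); apply/map_f => //; exact: mem_tnth.
Qed.

Lemma delta_le k r m (c : {ffun 'I_m -> 'I_r}) : delta k c <= Delta k r m.
Proof. rewrite /Delta. apply: leq_bigmax. Qed.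

Lemma delta_ok k r m : aw_prop k.+2 r.+1 m ->
  0 < Delta k.+2 r.+1 m /\
  forall c : {ffun 'I_m -> 'I_r.+1}, exists t : k.+2.-tuple 'I_m,
    is_mono_wave c t && (dlast t <= Delta k.+2 r.+1 m).
Proof.
move=> H.
have dpos : forall c : {ffun 'I_m -> 'I_r.+1}, 0 < delta k.+2 c.
  move=> c; have /existsP [t0 Ht0] := forallP H c.
  have mpos : 0 < m by case: (tnth t0 ord0) => i; lia.
  rewrite /delta; apply: (big_ind (fun x => 0 < x)) => //.
    by move=> x y; rewrite leq_min => -> ->.
  move=> t /andP[/waveP [_ H2 _] _]; rewrite /dlast /=.
  have := H2 k; rewrite size_vals; lia.
split.
  exact: leq_trans (dpos [ffun=> ord0]) (delta_le _ _ _ _).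
move=> c; have /existsP [t0 Ht0] := forallP H c.
case: (arg_minnP (fun t : k.+2.-tuple 'I_m => dlast t) Ht0) => t1 Ht1 Hmin.
exists t1; rewrite Ht1 /=.
apply: leq_trans (delta_le _ _ _ c).
rewrite /delta; apply: (big_ind (fun x => dlast t1 <= x)).
- rewrite /dlast; apply: leq_trans (leq_subr _ _) _; exact: vals_le.
- by move=> x y; rewrite leq_min => -> ->.
- exact: Hmin.
Qed.

Lemma main k r : aw_prop k.+1 r.+1 (M k.+1 r.+1) /\ 0 < M k.+1 r.+1.
Proof.
elim: k r => [|k IHk] r; first by split => //; exact: base_k1.
case: k IHk => [|k] IHk.
- elim: r => [|r IHr]; first by split => //; exact: (base_r1 1).
  rewrite M_2; split => //.
  have -> : r.+3 = 1 + 1 + M 2 r.+1 - 1 by rewrite M_2; lia.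
  apply: (@step 0 r 1 1 (M 2 r.+1)) => //; last by case: IHr.
  by move=> c; exists [tuple ord0].
- elim: r => [|r IHr]; first by rewrite M_1; split => //; exact: base_r1.
  rewrite M_rec.
  have [Haw Hpos] := IHk r.+1.
  have [HD Hm] := delta_ok _ _ _ Haw.
  case: IHr => IH1 IH2.
  split; last by lia.
  exact: step.
Qed.

Theorem lemma1p1 :
  (forall k r : nat, 3 <= k -> 2 <= r ->
     exists n, AW_spec k.-1 r n /\ n <= M k.-1 r) /\
  (forall k r : nat, 1 <= k -> 1 <= r ->
     exists n, AW_spec k r n /\ n <= M k r).
Proof.
have P2 : forall k r : nat, 1 <= k -> 1 <= r ->
     exists n, AW_spec k r n /\ n <= M k r.
  case=> [|k] [|r] // _ _.
  have [Haw Hpos] := main k r.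
  have ex : exists n, (0 < n) && aw_prop k.+1 r.+1 n.
    by exists (M k.+1 r.+1); rewrite Hpos Haw.
  case: (ex_minnP ex) => n /andP[Hn Hnaw] Hmin.
  exists n; split; last by apply: Hmin; rewrite Hpos Haw.
  split => // m0 Hm0 Hm0aw; apply: Hmin; by rewrite Hm0 Hm0aw.
split => // k r Hk Hr; apply: P2 => //; lia.
Qed.
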